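(* Let $R\in\{\mathrm{ML},\mathrm{wML},\mathrm{C},\mathrm{S}\}$. Then there is a precise forecasting system $\varphi$ for which every path $\omega\in\Omega$ is $R$-random; moreover, any such precise forecasting system is necessarily non-stationary and non-computable.
   Context: Notation: $\mathbb N=\{1,2,\dots\}$, $\mathbb N_0=\mathbb N\cup\{0\}$. $\Omega=\{0,1\}^{\mathbb N}$ is the set of paths $\omega=(\omega_1,\omega_2,\dots)$; $\omega_{1:n}=(\omega_1,\dots,\omega_n)$, $\omega_{1:0}=\square$. $\mathbb S=\bigcup_{n\in\mathbb N_0}\{0,1\}^n$ is the set of situations, $|s|$ the length, $sx$ concatenation. $\mathscr I$ is the set of closed intervals $I\subseteq[0,1]$. For $r\in[0,1]$, $f:\{0,1\}\to\mathbb R$: $E_r(f)=rf(1)+(1-r)f(0)$; $\overline E_I(f)=\max_{r\in I}E_r(f)$. A forecasting system is a map $\varphi:\mathbb S\to\mathscr I$; $\underline\varphi(s)=\min\varphi(s)$, $\overline\varphi(s)=\max\varphi(s)$; precise if each $\varphi(s)$ is a singleton; stationary if constant. A real process is $F:\mathbb S\to\mathbb R$; $\Delta F(s)$ is $x\mapsto F(sx)-F(s)$. $M$ is a supermartingale for $\varphi$ if $\overline E_{\varphi(s)}(\Delta M(s))\le0$ for all $s$. A test process is a non-negative real process with $F(\square)=1$; a test supermartingale for $\varphi$ is a test process that is a supermartingale for $\varphi$. A multiplier process $D$ assigns to each $s$ a function $D(s):\{0,1\}\to[0,\infty)$ and generates the test process $F(\square)=1$, $F(sx)=F(s)D(s)(x)$.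 Computability: maps from countable effectively encoded domains to $\mathbb N_0$ or $\mathbb Q$ are recursive if Turing-computable; a real map $r$ on a domain $\mathscr D$ is lower semicomputable if $r(d)=\lim_nq(d,n)$ for a recursive rational $q$ non-decreasing in $n$, computable if $|r(d)-q(d,n)|<2^{-n}$ for a recursive rational $q$. A forecasting system is computable if $\underline\varphi,\overline\varphi$ are computable. $\mathscr F_{\mathrm{ML}}$: lower semicomputable test processes; $\mathscr F_{\mathrm{wML}}$: test processes generated by lower semicomputable multiplier processes; $\mathscr F_{\mathrm C}=\mathscr F_{\mathrm S}$: positive rational-valued recursive test processes. $\overline{\mathbb T}_R(\varphi)$: elements of $\mathscr F_R$ that are test supermartingales for $\varphi$. For $R\in\{\mathrm{ML},\mathrm{wML},\mathrm C\}$, $\omega$ is $R$-random for $\varphi$ if no $T\in\overline{\mathbb T}_R(\varphi)$ has $\limsup_nT(\omega_{1:n})=\infty$. A real growth function is a computable, non-decreasing, unbounded $\tau:\mathbb N_0\to[0,\infty)$; $\omega$ is S-random for $\varphi$ if there are no $T\in\overline{\mathbb T}_{\mathrm S}(\varphi)$ and real growth function $\tau$ with $\limsup_n[T(\omega_{1:n})-\tau(n)]\ge0$. *)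

(* Defs.v *)
From Stdlib Require Import Reals Lra List.
Import ListNotations.
Open Scope R_scope.

(* Turing computability, via mu-recursive (partial recursive) functions *)
Inductive recfn : Type :=
| RZero : recfn
| RSucc : recfn
| RProj : nat -> recfn
| RComp : recfn -> list recfn -> recfn
| RPrec : recfn -> recfn -> recfn
| RMu   : recfn -> recfn.

Inductive reval : recfn -> list nat -> nat -> Prop :=
| ev_zero xs : reval RZero xs 0
| ev_succ x xs : reval RSucc (x :: xs) (Datatypes.S x)
| ev_proj i xs : (i < length xs)%nat -> reval (RProj i) xs (nth i xs 0%nat)
| ev_comp f gs xs ys y :
    revals gs xs ys -> reval f ys y -> reval (RComp f gs) xs y
| ev_prec0 f g xs y : reval f xs y -> reval (RPrec f g) (0%nat :: xs) y
| ev_precS f g n xs r y :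
    reval (RPrec f g) (n :: xs) r -> reval g (n :: r :: xs) y ->
    reval (RPrec f g) (Datatypes.S n :: xs) y
| ev_mu f xs n :
    reval f (n :: xs) 0%nat ->
    (forall m, (m < n)%nat -> exists k, reval f (m :: xs) (Datatypes.S k)) ->
    reval (RMu f) xs n
with revals : list recfn -> list nat -> list nat -> Prop :=
| evs_nil xs : revals [] xs []
| evs_cons g gs xs y ys :
    reval g xs y -> revals gs xs ys -> revals (g :: gs) xs (y :: ys).

Definition situation := list bool.
Definition path := nat -> bool.

(* Effective encoding of situations into nat (binary with a leading 1). *)
Definition encS (s : situation) : nat :=
  fold_left (fun acc (b : bool) => (2 * acc + (if b then 1 else 0))%nat) s 1%nat.

(* omega_{1:n} : the first n bits of the path (omega_1 = w 0). *)
Definition prefix (w : path) (n : nat) : situation := map w (seq 0 n).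

Definition rec_rat {D : Type} (enc : D -> list nat) (r : D -> R) : Prop :=
  exists c1 c2 c3 : recfn, forall d, exists a b k : nat,
    reval c1 (enc d) a /\ reval c2 (enc d) b /\ reval c3 (enc d) k /\
    r d = (INR a - INR b) / (INR k + 1).

Definition encN {D : Type} (enc : D -> list nat) (dn : D * nat) : list nat :=
  snd dn :: enc (fst dn).

Definition lower_semicomputable {D : Type} (enc : D -> list nat) (r : D -> R) : Prop :=
  exists q : D -> nat -> R,
    rec_rat (encN enc) (fun dn => q (fst dn) (snd dn)) /\
    forall d, (forall n, q d n <= q d (Datatypes.S n)) /\ Un_cv (q d) (r d).

Definition computable_real {D : Type} (enc : D -> list nat) (r : D -> R) : Prop :=
  exists q : D -> nat -> R,
    rec_rat (encN enc) (fun dn => q (fst dn) (snd dn)) /\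
    forall d n, Rabs (r d - q d n) < / 2 ^ n.

Definition encSit (s : situation) : list nat := [encS s].
Definition encSitBit (sx : situation * bool) : list nat :=
  [encS (fst sx); if snd sx then 1%nat else 0%nat].
Definition encNat (n : nat) : list nat := [n].

Definition forecasting_system (phi : situation -> R * R) : Prop :=
  forall s, 0 <= fst (phi s) /\ fst (phi s) <= snd (phi s) /\ snd (phi s) <= 1.

Definition precise (phi : situation -> R * R) : Prop :=
  forall s, fst (phi s) = snd (phi s).

Definition stationary (phi : situation -> R * R) : Prop :=
  exists I : R * R, forall s, phi s = I.

Definition computable_fs (phi : situation -> R * R) : Prop :=
  computable_real encSit (fun s => fst (phi s)) /\
  computable_real encSit (fun s => snd (phi s)).

Definition Ex (r : R) (f : bool -> R) : R := r * f true + (1 - r) * f false.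

Definition Delta (F : situation -> R) (s : situation) : bool -> R :=
  fun x => F (s ++ [x]) - F s.

(* Supermartingale: max_{r in phi(s)} E_r(Delta M(s)) <= 0, i.e. for all
   r in the closed interval phi(s), E_r(Delta M(s)) <= 0. *)
Definition supermartingale (phi : situation -> R * R) (M : situation -> R) : Prop :=
  forall s r, fst (phi s) <= r <= snd (phi s) -> Ex r (Delta M s) <= 0.

Definition test_process (F : situation -> R) : Prop :=
  (forall s, 0 <= F s) /\ F [] = 1.

Definition test_supermartingale phi F : Prop :=
  test_process F /\ supermartingale phi F.

Definition F_ML (T : situation -> R) : Prop :=
  test_process T /\ lower_semicomputable encSit T.

Definition generated_by (D : situation -> bool -> R) (T : situation -> R) : Prop :=
  T [] = 1 /\ forall s x, T (s ++ [x]) = T s * D s x.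

Definition F_wML (T : situation -> R) : Prop :=
  test_process T /\
  exists D : situation -> bool -> R,
    (forall s x, 0 <= D s x) /\
    lower_semicomputable encSitBit (fun sx => D (fst sx) (snd sx)) /\
    generated_by D T.

(* F_C = F_S : positive rational-valued recursive test processes *)
Definition F_C (T : situation -> R) : Prop :=
  test_process T /\ (forall s, 0 < T s) /\ rec_rat encSit T.

Definition growth_function (tau : nat -> R) : Prop :=
  computable_real encNat tau /\
  (forall n, 0 <= tau n) /\
  (forall n m, (n <= m)%nat -> tau n <= tau m) /\
  (forall B, exists n, tau n > B).

Definition limsup_infty (a : nat -> R) : Prop :=
  forall B N, exists n, (N <= n)%nat /\ a n > B.

Definition limsup_nonneg (a : nat -> R) : Prop :=
  forall eps N, eps > 0 -> exists n, (N <= n)%nat /\ a n > - eps.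

Inductive rnotion := R_ML | R_wML | R_C | R_S.

Definition random (Rn : rnotion) (phi : situation -> R * R) (w : path) : Prop :=
  match Rn with
  | R_ML => ~ exists T, F_ML T /\ test_supermartingale phi T /\
                        limsup_infty (fun n => T (prefix w n))
  | R_wML => ~ exists T, F_wML T /\ test_supermartingale phi T /\
                        limsup_infty (fun n => T (prefix w n))
  | R_C => ~ exists T, F_C T /\ test_supermartingale phi T /\
                        limsup_infty (fun n => T (prefix w n))
  | R_S => ~ exists T tau, F_C T /\ test_supermartingale phi T /\
                        growth_function tau /\
                        limsup_nonneg (fun n => T (prefix w n) - tau n)
  end.

(* Main.v *)
Require Import Defs.
From Stdlib Require Import Reals List Lia Arith Lra ZArith Cantor Classical ClassicalEpsilon FunctionalExtensionality.
Import ListNotations.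

Fixpoint reval_fun f xs y (H : reval f xs y) {struct H} : forall y', reval f xs y' -> y = y'
with revals_fun gs xs ys (H : revals gs xs ys) {struct H} : forall ys', revals gs xs ys' -> ys = ys'.
Proof.
- destruct H as [xs|x xs|i xs Hi|f gs xs ys y Hgs Hf|f g xs y Hf|f g n xs r y Hr Hg|f xs n H0 Hlt];
  intros y' H'; inversion H'; subst; try reflexivity.
  + match goal with Hb : revals gs xs _ |- _ => pose proof (revals_fun _ _ _ Hgs _ Hb); subst end.
    match goal with Hb : reval f _ y' |- _ => apply (reval_fun _ _ _ Hf _ Hb) end.
  + match goal with Hb : reval f _ y' |- _ => apply (reval_fun _ _ _ Hf _ Hb) end.
  + match goal with Hb : reval (RPrec f g) _ _ |- _ => pose proof (reval_fun _ _ _ Hr _ Hb); subst end.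
    match goal with Hb : reval g _ y' |- _ => apply (reval_fun _ _ _ Hg _ Hb) end.
  + rename H1 into H0', H2 into Hlt'.
    destruct (Nat.lt_trichotomy n y') as [Hl|[Heq|Hgt]]; auto.
    * destruct (Hlt' n Hl) as [k Hk]. pose proof (reval_fun _ _ _ H0 _ Hk). discriminate.
    * destruct (Hlt y' Hgt) as [k Hk]. pose proof (reval_fun _ _ _ Hk _ H0'). discriminate.
- destruct H as [xs|g gs xs y ys Hg Hgs]; intros ys' H'; inversion H'; subst; try reflexivity.
  f_equal.
  + match goal with Hb : reval g _ _ |- _ => apply (reval_fun _ _ _ Hg _ Hb) end.
  + match goal with Hb : revals gs _ _ |- _ => apply (revals_fun _ _ _ Hgs _ Hb) end.
Qed.
Open Scope nat_scope.

Definition P i := RProj i.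
Fixpoint cst k := match k with 0 => RZero | S k => RComp RSucc [cst k] end.

Lemma reval_conv f xs y y' : reval f xs y -> y = y' -> reval f xs y'.
Proof. intros H ->; exact H. Qed.

Lemma ev_c1 f g xs a y : reval g xs a -> reval f [a] y -> reval (RComp f [g]) xs y.
Proof. intros. econstructor; [repeat econstructor; eauto | eauto]. Qed.
Lemma ev_c2 f g1 g2 xs a b y : reval g1 xs a -> reval g2 xs b -> reval f [a;b] y ->
  reval (RComp f [g1;g2]) xs y.
Proof. intros. econstructor; [repeat econstructor; eauto | eauto]. Qed.

Lemma ev_cst k xs : reval (cst k) xs k.
Proof. induction k; simpl. constructor. eapply ev_c1; [exact IHk| constructor]. Qed.

Lemma ev_P0 x xs : reval (P 0) (x :: xs) x.
Proof. apply (ev_proj 0 (x::xs)). simpl; lia. Qed.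
Lemma ev_P1 x y xs : reval (P 1) (x :: y :: xs) y.
Proof. apply (ev_proj 1 (x::y::xs)). simpl; lia. Qed.
Lemma ev_P2 x y z xs : reval (P 2) (x :: y :: z :: xs) z.
Proof. apply (ev_proj 2 (x::y::z::xs)). simpl; lia. Qed.

Ltac rv := first [ apply ev_cst | apply ev_P0 | apply ev_P1 | apply ev_P2 ].

Definition ADD := RPrec (P 0) (RComp RSucc [P 1]).
Lemma ev_ADD x y : reval ADD [x; y] (x + y).
Proof.
  induction x. apply ev_prec0, ev_P0.
  eapply ev_precS; [exact IHx|]. eapply ev_c1; [rv| constructor].
Qed.

Definition MUL := RPrec RZero (RComp ADD [P 1; P 2]).
Lemma ev_MUL x y : reval MUL [x; y] (x * y).
Proof.
  induction x. apply ev_prec0; constructor.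
  eapply ev_precS; [exact IHx|]. eapply ev_c2; [rv|rv|].
  eapply reval_conv; [apply ev_ADD| simpl; lia].
Qed.

Definition PRED := RPrec RZero (P 0).
Lemma ev_PRED x : reval PRED [x] (x - 1).
Proof.
  induction x. apply ev_prec0; constructor.
  eapply ev_precS; [exact IHx|]. eapply reval_conv; [rv|lia].
Qed.

Definition SUBr := RPrec (P 0) (RComp PRED [P 1]).
Lemma ev_SUBr j x : reval SUBr [j; x] (x - j).
Proof.
  induction j. eapply reval_conv; [apply ev_prec0, ev_P0| lia].
  eapply ev_precS; [exact IHj|]. eapply ev_c1; [rv|]. eapply reval_conv; [apply ev_PRED|lia].
Qed.

Definition SUB := RComp SUBr [P 1; P 0].
Lemma ev_SUB x y : reval SUB [x; y] (x - y).
Proof. eapply ev_c2; [rv|rv|apply ev_SUBr]. Qed.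

Definition POW := RPrec (cst 1) (RComp MUL [P 1; P 2]).
Lemma ev_POW e b : reval POW [e; b] (b ^ e).
Proof.
  induction e. apply ev_prec0, ev_cst.
  eapply ev_precS; [exact IHe|]. eapply ev_c2; [rv|rv|].
  eapply reval_conv; [apply ev_MUL| simpl; lia].
Qed.

Definition DIVF := RComp SUB [RComp ADD [P 1; cst 1]; RComp MUL [RComp ADD [P 0; cst 1]; P 2]].
Lemma ev_DIVF z x d : reval DIVF [z; x; d] ((x + 1) - (z + 1) * d).
Proof.
  eapply ev_c2; [eapply ev_c2; [rv|rv|apply ev_ADD] | | apply ev_SUB].
  eapply ev_c2; [eapply ev_c2; [rv|rv|apply ev_ADD] | rv | apply ev_MUL].
Qed.

Definition DIV := RMu DIVF.
Lemma ev_DIV x d : d <> 0 -> reval DIV [x; d] (x / d).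
Proof.
  intros Hd. constructor.
  - eapply reval_conv; [apply ev_DIVF|].
    pose proof (Nat.div_mod x d Hd). pose proof (Nat.mod_upper_bound x d Hd). nia.
  - intros m Hm. exists (x - (m + 1) * d).
    eapply reval_conv; [apply ev_DIVF|].
    assert ((m+1) * d <= x). { pose proof (Nat.div_mod x d Hd). nia. }
    lia.
Qed.

Definition LOGF := RComp SUB [RComp ADD [P 1; cst 1]; RComp POW [RComp ADD [P 0; cst 1]; cst 2]].
Lemma ev_LOGF z x : reval LOGF [z; x] ((x + 1) - 2 ^ (z + 1)).
Proof.
  eapply ev_c2; [eapply ev_c2; [rv|rv|apply ev_ADD] | | apply ev_SUB].
  eapply ev_c2; [eapply ev_c2; [rv|rv|apply ev_ADD] | rv | apply ev_POW].
Qed.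

Definition LOG := RMu LOGF.
Lemma ev_LOG x : 0 < x -> reval LOG [x] (Nat.log2 x).
Proof.
  intros Hx. destruct (Nat.log2_spec x Hx) as [H1 H2]. constructor.
  - eapply reval_conv; [apply ev_LOGF|]. rewrite !Nat.add_1_r. lia.
  - intros m Hm. exists (x - 2 ^ (m + 1)).
    eapply reval_conv; [apply ev_LOGF|].
    assert (2 ^ (m+1) <= 2 ^ Nat.log2 x) by (apply Nat.pow_le_mono_r; lia).
    lia.
Qed.

Definition MOD2 := RComp SUB [P 0; RComp MUL [cst 2; RComp DIV [P 0; cst 2]]].
Lemma ev_MOD2 x : reval MOD2 [x] (x mod 2).
Proof.
  eapply ev_c2; [rv| |].
  eapply ev_c2; [rv| eapply ev_c2; [rv|rv|apply ev_DIV; lia] | apply ev_MUL].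
  eapply reval_conv; [apply ev_SUB|]. pose proof (Nat.div_mod x 2). lia.
Qed.

Definition XOR := RComp SUB [RComp ADD [P 0; P 1]; RComp MUL [cst 2; RComp MUL [P 0; P 1]]].
Lemma ev_XOR a b : reval XOR [a; b] ((a + b) - 2 * (a * b)).
Proof.
  eapply ev_c2; [eapply ev_c2; [rv|rv|apply ev_ADD] | | apply ev_SUB].
  eapply ev_c2; [rv| eapply ev_c2; [rv|rv|apply ev_MUL] | apply ev_MUL].
Qed.
Open Scope nat_scope.

Definition bn (b : bool) : nat := if b then 1 else 0.
Definition fstep := fun acc (b : bool) => (2 * acc + (if b then 1 else 0))%nat.

Lemma fold_step t a : fold_left fstep t a = a * 2 ^ length t + fold_left fstep t 0.
Proof.
  revert a; induction t as [|b t IH]; intros a; simpl. lia.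
  rewrite (IH (fstep a b)), (IH (fstep 0 b)). unfold fstep. destruct b; nia.
Qed.

Lemma fold_bound t : fold_left fstep t 0 < 2 ^ length t.
Proof.
  induction t as [|b t IH]. simpl. lia.
  change (fold_left fstep t (fstep 0 b) < 2 * 2 ^ length t). rewrite fold_step.
  assert (fstep 0 b <= 1) by (destruct b; cbv; lia). nia.
Qed.

Lemma encS_app s t : encS (s ++ t) = encS s * 2 ^ length t + fold_left fstep t 0.
Proof. unfold encS. rewrite fold_left_app. apply fold_step. Qed.

Lemma encS_snoc s b : encS (s ++ [b]) = 2 * encS s + bn b.
Proof. rewrite encS_app. simpl. unfold fstep, bn. destruct b; lia. Qed.

Lemma encS_bounds s : 2 ^ length s <= encS s < 2 ^ S (length s).
Proof.
  unfold encS. change (2 ^ length s <= fold_left fstep s 1 < 2 ^ S (length s)).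
  rewrite fold_step. pose proof (fold_bound s). simpl. lia.
Qed.

Lemma encS_pos s : 0 < encS s.
Proof. pose proof (encS_bounds s). pose proof (Nat.pow_nonzero 2 (length s)). lia. Qed.

Lemma log2_encS s : Nat.log2 (encS s) = length s.
Proof. apply Nat.log2_unique. lia. apply encS_bounds. Qed.

Lemma encS_firstn s i : i <= length s ->
  encS s / 2 ^ (length s - i) = encS (firstn i s).
Proof.
  intros Hi. rewrite <- (firstn_skipn i s) at 1. rewrite encS_app.
  rewrite length_skipn. rewrite Nat.div_add_l by (apply Nat.pow_nonzero; lia).
  rewrite Nat.div_small. lia. rewrite <- length_skipn. apply fold_bound.
Qed.

Section Prog.
Variable cd : recfn.
Variable dir : situation -> bool.
Hypothesis Hcd : forall s, reval cd [encS s] (bn (dir s)).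

Definition E := RComp DIV [P 1; RComp POW [RComp SUB [RComp LOG [P 1]; P 0]; cst 2]].
Definition BIT := RComp MOD2 [RComp E [RComp ADD [P 0; cst 1]; P 1]].
Definition MATCH := RComp XOR [BIT; RComp cd [E]].
Definition MC := RPrec RZero (RComp ADD [P 1; RComp MATCH [P 0; P 2]]).
Definition MM := RComp MC [RComp LOG [P 0]; P 0].
Definition NUM := RComp POW [MM; cst 6].
Definition DEN := RComp PRED [RComp POW [RComp LOG [P 0]; cst 4]].

Definition matchn (d b : bool) : nat := if Bool.eqb b (negb d) then 1 else 0.

Fixpoint mrev (r : list bool) : nat :=
  match r with [] => 0 | b :: r' => mrev r' + matchn (dir (rev r')) b end.
Definition mcount (s : situation) := mrev (rev s).

Lemma mcount_snoc s b : mcount (s ++ [b]) = mcount s + matchn (dir s) b.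
Proof. unfold mcount. rewrite rev_app_distr. simpl. rewrite rev_involutive. reflexivity. Qed.

Lemma mcount_nil : mcount [] = 0.
Proof. reflexivity. Qed.

Lemma ev_E i s : i <= length s -> reval E [i; encS s] (encS (firstn i s)).
Proof.
  intros Hi. eapply ev_c2; [rv| |].
  eapply ev_c2; [eapply ev_c2; [eapply ev_c1; [rv| apply ev_LOG, encS_pos] | rv | apply ev_SUB] | rv | apply ev_POW].
  eapply reval_conv; [apply ev_DIV; apply Nat.pow_nonzero; lia|].
  rewrite log2_encS. apply encS_firstn; auto.
Qed.

Lemma firstn_S_snoc (s : list bool) i : i < length s -> firstn (S i) s = firstn i s ++ [nth i s false].
Proof.
  revert i; induction s as [|a s IH]; intros i Hi; simpl in *. lia.
  destruct i. reflexivity. simpl. f_equal. apply IH. lia.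
Qed.

Lemma ev_BIT i s : i < length s -> reval BIT [i; encS s] (bn (nth i s false)).
Proof.
  intros Hi. eapply ev_c1.
  eapply ev_c2; [eapply ev_c2; [rv|rv|apply ev_ADD] | rv | ].
  apply ev_E; lia.
  eapply reval_conv; [apply ev_MOD2|].
  rewrite Nat.add_1_r, firstn_S_snoc, encS_snoc by auto.
  unfold bn; destruct (nth i s false); match goal with |- ?g => idtac g end; [rewrite (Nat.mul_comm 2), Nat.add_comm, Nat.Div0.mod_add; reflexivity | rewrite Nat.add_0_r, (Nat.mul_comm 2), Nat.Div0.mod_mul; reflexivity].
Qed.

Lemma ev_MATCH i s : i < length s -> reval MATCH [i; encS s] (matchn (dir (firstn i s)) (nth i s false)).
Proof.
  intros Hi. eapply ev_c2; [apply ev_BIT; auto | eapply ev_c1; [apply ev_E; lia | apply Hcd] |].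
  eapply reval_conv; [apply ev_XOR|].
  unfold bn, matchn; destruct (nth i s false), (dir (firstn i s)); reflexivity.
Qed.

Lemma ev_MC i s : i <= length s -> reval MC [i; encS s] (mcount (firstn i s)).
Proof.
  induction i; intros Hi. apply ev_prec0; constructor.
  eapply ev_precS; [apply IHi; lia|].
  eapply ev_c2; [rv| eapply ev_c2; [rv|rv| apply ev_MATCH; lia] |].
  eapply reval_conv; [apply ev_ADD|].
  rewrite firstn_S_snoc, mcount_snoc by lia. reflexivity.
Qed.

Lemma ev_MM s : reval MM [encS s] (mcount s).
Proof.
  eapply ev_c2; [eapply ev_c1; [rv| apply ev_LOG, encS_pos] | rv |].
  rewrite log2_encS. eapply reval_conv; [apply ev_MC; auto|]. rewrite firstn_all. reflexivity.
Qed.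

Lemma ev_NUM s : reval NUM [encS s] (6 ^ mcount s).
Proof. eapply ev_c2; [apply ev_MM | rv | apply ev_POW]. Qed.

Lemma ev_DEN s : reval DEN [encS s] (4 ^ length s - 1).
Proof.
  eapply ev_c1; [eapply ev_c2; [eapply ev_c1; [rv| apply ev_LOG, encS_pos] | rv | apply ev_POW] |].
  rewrite log2_encS. apply ev_PRED.
Qed.
End Prog.
Open Scope R_scope.

Lemma Un_cv_const (c : R) : Un_cv (fun _ => c) c.
Proof. intros e He. exists 0%nat. intros n _. unfold R_dist. rewrite Rminus_diag, Rabs_R0. exact He. Qed.

Lemma exists_nat_gt (B : R) : exists n : nat, B < INR n.
Proof.
  destruct (Rle_or_lt B 0) as [H|H]. exists 1%nat. simpl. lra.
  destruct (archimed B) as [H1 _]. exists (Z.to_nat (up B)).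
  rewrite INR_IZR_INZ, Z2Nat.id. exact H1.
  apply le_IZR. lra.
Qed.

Lemma bernoulli n : 1 + INR n / 2 <= (3/2) ^ n.
Proof.
  induction n. simpl. lra. rewrite S_INR. simpl. pose proof (pos_INR n). nra.
Qed.

Definition fac (d b : bool) : R := if Bool.eqb b (negb d) then 3/2 else 1/4.

Section Main.
Variable cd : recfn.
Variable dir : situation -> bool.
Hypothesis Hcd : forall s, reval cd [encS s] (bn (dir s)).
Variable phi : situation -> R * R.
Hypothesis Hprec : precise phi.
Hypothesis Hdir1 : forall s, dir s = true -> 2/5 <= fst (phi s).
Hypothesis Hdir0 : forall s, dir s = false -> fst (phi s) <= 3/5.

Definition Tval (s : situation) : R := 6 ^ mcount dir s / 4 ^ length s.

Lemma Tval_nil : Tval [] = 1.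
Proof. unfold Tval. simpl. lra. Qed.

Lemma Tval_pos s : 0 < Tval s.
Proof. unfold Tval. apply Rdiv_lt_0_compat; apply pow_lt; lra. Qed.

Lemma Tval_snoc s b : Tval (s ++ [b]) = Tval s * fac (dir s) b.
Proof.
  unfold Tval, fac. rewrite mcount_snoc, length_app, !pow_add. simpl.
  unfold matchn. destruct (Bool.eqb b (negb (dir s))); simpl;
  pose proof (pow_lt 4 (length s)); field; lra.
Qed.

Lemma Tval_rec : rec_rat encSit Tval.
Proof.
  exists (NUM cd), RZero, (DEN). intros s. exists (6 ^ mcount dir s)%nat, 0%nat, (4 ^ length s - 1)%nat.
  split; [apply ev_NUM; auto|]. split; [constructor|]. split; [apply ev_DEN|].
  unfold Tval. rewrite pow_INR, minus_INR, pow_INR. simpl INR. replace (1+1+1+1+1+1) with 6 by ring. replace (1+1+1+1) with 4 by ring. rewrite Rminus_0_r. unfold Rminus. rewrite Rplus_assoc, Rplus_opp_l, Rplus_0_r. reflexivity.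
  pose proof (Nat.pow_nonzero 4 (length s)). lia.
Qed.

Lemma Tval_test : test_process Tval.
Proof. split. intros s; left; apply Tval_pos. apply Tval_nil. Qed.

Lemma Tval_super : supermartingale phi Tval.
Proof.
  intros s r Hr. rewrite <- (Hprec s) in Hr. assert (r = fst (phi s)) by lra. subst r.
  unfold Ex, Defs.Delta. rewrite !Tval_snoc. pose proof (Tval_pos s).
  destruct (dir s) eqn:Hd; unfold fac; simpl.
  - specialize (Hdir1 s Hd). nra.
  - specialize (Hdir0 s Hd). nra.
Qed.

Fixpoint wpre (n : nat) : situation :=
  match n with O => [] | S n => wpre n ++ [negb (dir (wpre n))] end.
Definition wpath : path := fun i => negb (dir (wpre i)).

Lemma prefix_wpath n : prefix wpath n = wpre n.
Proof.
  induction n. reflexivity. unfold prefix in *. rewrite seq_S, map_app, IHn. reflexivity.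
Qed.

Lemma Tval_wpre n : Tval (wpre n) = (3/2) ^ n.
Proof.
  induction n. apply Tval_nil. simpl. rewrite Tval_snoc, IHn. unfold fac.
  rewrite Bool.eqb_reflx. ring.
Qed.

Lemma Tval_unb : limsup_infty (fun n => Tval (prefix wpath n)).
Proof.
  intros Bd N. destruct (exists_nat_gt (2 * Bd)) as [m Hm]. exists (Nat.max N m).
  split. lia. rewrite prefix_wpath, Tval_wpre. pose proof (bernoulli (Nat.max N m)).
  assert (INR m <= INR (Nat.max N m)) by (apply le_INR; lia). lra.
Qed.

Lemma not_all_random Rn : ~ (forall w, random Rn phi w).
Proof.
  intros Hall. specialize (Hall wpath). destruct Rn; simpl in Hall; apply Hall.
  - exists Tval. split; [|split; [split; [apply Tval_test|apply Tval_super]|apply Tval_unb]].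
    split. apply Tval_test. exists (fun s _ => Tval s). split.
    + destruct Tval_rec as (c1 & c2 & c3 & H). exists (RComp c1 [P 1]), (RComp c2 [P 1]), (RComp c3 [P 1]).
      intros [s n]. destruct (H s) as (a & b & k & H1 & H2 & H3 & H4). exists a, b, k.
      split; [eapply ev_c1; [rv|exact H1]|]. split; [eapply ev_c1; [rv|exact H2]|].
      split; [eapply ev_c1; [rv|exact H3]|]. exact H4.
    + intros s; split. intros; lra. apply Un_cv_const.
  - exists Tval. split; [|split; [split; [apply Tval_test|apply Tval_super]|apply Tval_unb]].
    split. apply Tval_test. exists (fun s b => fac (dir s) b). split.
    { intros s x. unfold fac. destruct (Bool.eqb _ _); lra. }
    split.
    + exists (fun sx _ => fac (dir (fst sx)) (snd sx)). split.
      * exists (RComp ADD [cst 1; RComp MUL [cst 5; RComp XOR [P 2; RComp cd [P 1]]]]), RZero, (cst 3).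
        intros [[s x] n]. exists (1 + 5 * matchn (dir s) x)%nat, 0%nat, 3%nat.
        unfold encN, encSitBit; simpl fst; simpl snd. split; [|split; [constructor|split; [apply ev_cst|]]].
        -- eapply ev_c2; [rv| |apply ev_ADD].
           eapply ev_c2; [rv| |apply ev_MUL].
           eapply ev_c2; [rv| eapply ev_c1; [rv| apply Hcd] |].
           eapply reval_conv; [apply ev_XOR|]. unfold matchn, bn; destruct x, (dir s); reflexivity.
        -- unfold fac, matchn. destruct (Bool.eqb x (negb (dir s))); simpl; field.
      * intros sx. split. intros; lra. apply Un_cv_const.
    + split. apply Tval_nil. intros s x. apply Tval_snoc.
  - exists Tval. split; [|split; [split; [apply Tval_test|apply Tval_super]|apply Tval_unb]].
    split. apply Tval_test. split. apply Tval_pos. apply Tval_rec.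
  - exists Tval, (fun n => INR n / 2). split; [|split; [split; [apply Tval_test|apply Tval_super]|split]].
    + split. apply Tval_test. split. apply Tval_pos. apply Tval_rec.
    + split; [|split; [|split]].
      * exists (fun n _ => INR n / 2). split.
        -- exists (P 1), RZero, (cst 1). intros [n m]. exists n, 0%nat, 1%nat.
           split; [rv|]. split; [constructor|]. split; [apply ev_cst|]. simpl. f_equal; ring.
        -- intros n m. rewrite Rminus_diag, Rabs_R0. apply Rinv_0_lt_compat, pow_lt; lra.
      * intros n. pose proof (pos_INR n). lra.
      * intros n m Hnm. apply le_INR in Hnm. lra.
      * intros Bd. destruct (exists_nat_gt (2 * Bd)) as [m Hm]. exists m. lra.
    + intros eps N Heps. exists N. split. lia. rewrite prefix_wpath, Tval_wpre.
      pose proof (bernoulli N). lra.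
Qed.
End Main.

Definition recfn_ind' (P : recfn -> Prop) (H0 : P RZero) (H1 : P RSucc)
  (H2 : forall i, P (RProj i)) (H3 : forall f gs, P f -> Forall P gs -> P (RComp f gs))
  (H4 : forall f g, P f -> P g -> P (RPrec f g)) (H5 : forall f, P f -> P (RMu f)) :
  forall f, P f :=
  fix F f := match f with
  | RZero => H0 | RSucc => H1 | RProj i => H2 i
  | RComp f gs => H3 f gs (F f) ((fix G l : Forall P l :=
       match l with [] => Forall_nil _ | g :: l => Forall_cons g (F g) (G l) end) gs)
  | RPrec f g => H4 f g (F f) (F g)
  | RMu f => H5 f (F f)
  end.

Arguments to_nat : simpl never.
Arguments of_nat : simpl never.

Fixpoint encLN (l : list nat) : nat :=
  match l with [] => 0 | a :: l => S (to_nat (a, encLN l)) end.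

Lemma encLN_inj l1 l2 : encLN l1 = encLN l2 -> l1 = l2.
Proof.
  revert l2; induction l1 as [|a l1 IH]; intros [|b l2]; simpl; intro H; try discriminate; auto.
  injection H as H. apply (f_equal of_nat) in H. rewrite !cancel_of_to in H.
  injection H as -> H. f_equal. auto.
Qed.

Fixpoint encR (f : recfn) : nat :=
  match f with
  | RZero => to_nat (0, 0) | RSucc => to_nat (1, 0) | RProj i => to_nat (2, i)
  | RComp f gs => to_nat (3, to_nat (encR f, encLN (map encR gs)))
  | RPrec f g => to_nat (4, to_nat (encR f, encR g))
  | RMu f => to_nat (5, encR f)
  end%nat.

Lemma encR_inj : forall f g, encR f = encR g -> f = g.
Proof.
  apply (recfn_ind' (fun f => forall g, encR f = encR g -> f = g));
  [| | intros i | intros f gs IHf IHgs | intros f g0 IHf IHg | intros f IHf];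
  intros [| |j|f' gs'|f' g'|f'] H; simpl in H; apply (f_equal of_nat) in H;
  rewrite !cancel_of_to in H; try discriminate; auto.
  - injection H as ->. reflexivity.
  - injection H as H. apply (f_equal of_nat) in H; rewrite !cancel_of_to in H.
    injection H as H1 H2. rewrite (IHf _ H1). f_equal. apply encLN_inj in H2.
    clear -IHgs H2. revert gs' H2; induction IHgs as [|g gs Hg _ IH]; intros [|g'' gs'] H2;
    simpl in H2; try discriminate; auto.
    injection H2 as H3 H4. f_equal; auto.
  - injection H as H. apply (f_equal of_nat) in H; rewrite !cancel_of_to in H.
    injection H as H1 H2. f_equal; auto.
  - injection H as H. f_equal; auto.
Qed.

Definition code3 (c : recfn * recfn * recfn) : nat :=
  let '(c1, c2, c3) := c in to_nat (encR c1, to_nat (encR c2, encR c3)).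

Lemma code3_inj c c' : code3 c = code3 c' -> c = c'.
Proof.
  destruct c as [[c1 c2] c3], c' as [[d1 d2] d3]; simpl. intro H.
  apply (f_equal of_nat) in H; rewrite !cancel_of_to in H. injection H as H1 H.
  apply (f_equal of_nat) in H; rewrite !cancel_of_to in H. injection H as H2 H3.
  apply encR_inj in H1, H2, H3. subst. reflexivity.
Qed.
Open Scope R_scope.

Section Kill.
Variable Tn : nat -> situation -> R.

Definition Ainc n s := exists x, Tn n (s ++ [x]) > Tn n s.
Definition rel n := forall L : list situation, exists s, Ainc n s /\ ~ In s L.

Fixpoint picks (n : nat) : list situation :=
  match n with
  | O => []
  | S n => picks n ++ [epsilon (inhabits []) (fun s => Ainc n s /\ ~ In s (picks n))]
  end.
Definition pick n := epsilon (inhabits []) (fun s => Ainc n s /\ ~ In s (picks n)).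

Lemma pick_spec n : rel n -> Ainc n (pick n) /\ ~ In (pick n) (picks n).
Proof. intros H. apply (epsilon_spec (inhabits []) (fun s => Ainc n s /\ ~ In s (picks n))), H. Qed.

Lemma pick_in m n : (m < n)%nat -> In (pick m) (picks n).
Proof.
  induction n; intros H. lia. simpl. apply in_or_app.
  destruct (Nat.eq_dec m n) as [->|Hne]. right; left; reflexivity. left; apply IHn; lia.
Qed.

Lemma pick_inj m n : rel m -> rel n -> pick m = pick n -> m = n.
Proof.
  intros Hm Hn He. destruct (Nat.lt_trichotomy m n) as [H|[H|H]]; auto.
  - exfalso. apply (proj2 (pick_spec n Hn)). rewrite <- He. apply pick_in; auto.
  - exfalso. apply (proj2 (pick_spec m Hm)). rewrite He. apply pick_in; auto.
Qed.

Definition kp n s : R := if Rlt_dec (Tn n s) (Tn n (s ++ [true])) then 1 else 0.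
Definition owner s := epsilon (inhabits 0%nat) (fun n => rel n /\ pick n = s).
Definition phiK (s : situation) : R * R := (kp (owner s) s, kp (owner s) s).

Lemma phiK_fs : forecasting_system phiK.
Proof. intros s. unfold phiK, kp; simpl. destruct Rlt_dec; lra. Qed.
Lemma phiK_precise : precise phiK.
Proof. intros s; reflexivity. Qed.

Lemma length_prefix w m : length (prefix w m) = m.
Proof. unfold prefix. rewrite length_map, length_seq. reflexivity. Qed.

Lemma prefix_S w m : prefix w (S m) = prefix w m ++ [w m].
Proof. unfold prefix. rewrite seq_S, map_app. reflexivity. Qed.

Lemma unb_rel n w : limsup_infty (fun m => Tn n (prefix w m)) -> rel n.
Proof.
  intros Hu L. apply NNPP. intros Hn.
  assert (HA : forall s, Ainc n s -> In s L).
  { intros s Hs. apply NNPP. intros Hs'. apply Hn. exists s. auto. }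
  set (N := S (list_max (map (@length bool) L))).
  assert (Hnot : forall m, (N <= m)%nat -> ~ In (prefix w m) L).
  { intros m Hm Hin. assert (length (prefix w m) <= list_max (map (@length bool) L))%nat.
    { assert (Forall (fun k => k <= list_max (map (@length bool) L))%nat (map (@length bool) L)) as HF
        by (apply list_max_le; lia).
      rewrite Forall_forall in HF. apply HF. apply in_map. exact Hin. }
    rewrite length_prefix in H. unfold N in Hm. lia. }
  assert (Hdec : forall k, Tn n (prefix w (N + k)) <= Tn n (prefix w N)).
  { induction k. rewrite Nat.add_0_r. lra.
    rewrite Nat.add_succ_r, prefix_S.
    assert (~ Ainc n (prefix w (N + k))) as Hna.
    { intros Ha. apply (Hnot (N + k)%nat). lia. apply HA, Ha. }
    assert (Tn n (prefix w (N + k) ++ [w (N + k)%nat]) <= Tn n (prefix w (N + k))).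
    { apply Rnot_lt_le. intros Hl. apply Hna. exists (w (N + k)%nat). exact Hl. }
    lra. }
  destruct (Hu (Tn n (prefix w N)) N) as [m [Hm Hgt]].
  specialize (Hdec (m - N)%nat). replace (N + (m - N))%nat with m in Hdec by lia. lra.
Qed.

Lemma phiK_kills n w : limsup_infty (fun m => Tn n (prefix w m)) -> ~ supermartingale phiK (Tn n).
Proof.
  intros Hu Hs. pose proof (unb_rel n w Hu) as Hr.
  destruct (pick_spec n Hr) as [[x Hx] _].
  set (s := pick n) in *.
  assert (Ho : rel (owner s) /\ pick (owner s) = s).
  { apply (epsilon_spec (inhabits 0%nat) (fun k => rel k /\ pick k = s)). exists n; auto. }
  assert (owner s = n) as Heq by (apply pick_inj; tauto).
  specialize (Hs s (kp n s)). unfold phiK in Hs; simpl in Hs. rewrite Heq in Hs.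
  assert (Ex (kp n s) (Defs.Delta (Tn n) s) > 0).
  { unfold Ex, Defs.Delta, kp. destruct Rlt_dec as [Hl|Hl].
    - lra.
    - destruct x. lra. lra. }
  assert (Ex (kp n s) (Defs.Delta (Tn n) s) <= 0) by (apply Hs; lra).
  lra.
Qed.
End Kill.
Open Scope R_scope.

Definition rr {D : Type} (c : recfn * recfn * recfn) (enc : D -> list nat) (r : D -> R) : Prop :=
  let '(c1, c2, c3) := c in
  forall d, exists a b k : nat,
    reval c1 (enc d) a /\ reval c2 (enc d) b /\ reval c3 (enc d) k /\
    r d = (INR a - INR b) / (INR k + 1).

Lemma rr_fun {D : Type} c (enc : D -> list nat) r1 r2 : rr c enc r1 -> rr c enc r2 -> forall d, r1 d = r2 d.
Proof.
  destruct c as [[c1 c2] c3]; simpl. intros H1 H2 d.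
  destruct (H1 d) as (a & b & k & Ha & Hb & Hk & E1).
  destruct (H2 d) as (a' & b' & k' & Ha' & Hb' & Hk' & E2).
  rewrite (reval_fun _ _ _ Ha _ Ha'), (reval_fun _ _ _ Hb _ Hb'), (reval_fun _ _ _ Hk _ Hk') in E1.
  congruence.
Qed.

Lemma rec_rat_rr {D : Type} (enc : D -> list nat) r : rec_rat enc r -> exists c, rr c enc r.
Proof. intros (c1 & c2 & c3 & H). exists (c1, c2, c3). exact H. Qed.

Section Enum.
Variable Rep : recfn * recfn * recfn -> (situation -> R) -> Prop.
Hypothesis Rep_fun : forall c T1 T2, Rep c T1 -> Rep c T2 -> T1 = T2.

Definition Tn (n : nat) : situation -> R :=
  epsilon (inhabits (fun _ => 0)) (fun T => exists c, code3 c = n /\ Rep c T).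

Lemma Tn_spec c T : Rep c T -> Tn (code3 c) = T.
Proof.
  intros H. assert (Hs : exists c', code3 c' = code3 c /\ Rep c' (Tn (code3 c))).
  { apply (epsilon_spec (inhabits (fun _ => 0)) (fun T => exists c', code3 c' = code3 c /\ Rep c' T)).
    exists T, c. auto. }
  destruct Hs as [c' [Hc HR]]. apply code3_inj in Hc. subst c'. eapply Rep_fun; eauto.
Qed.

Lemma enum_kill c T w : Rep c T -> limsup_infty (fun m => T (prefix w m)) ->
  ~ supermartingale (phiK Tn) T.
Proof.
  intros HR Hu. rewrite <- (Tn_spec c T HR) in *. apply (phiK_kills Tn _ w Hu).
Qed.
End Enum.

Definition RepML c (T : situation -> R) := exists q : situation -> nat -> R,
  rr c (encN encSit) (fun dn => q (fst dn) (snd dn)) /\ forall d, Un_cv (q d) (T d).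

Lemma RepML_fun c T1 T2 : RepML c T1 -> RepML c T2 -> T1 = T2.
Proof.
  intros [q1 [H1 C1]] [q2 [H2 C2]]. apply functional_extensionality. intros s.
  pose proof (rr_fun _ _ _ _ H1 H2) as E.
  assert (q1 s = q2 s) as Eq by (apply functional_extensionality; intros n; apply (E (s, n))).
  specialize (C1 s). rewrite Eq in C1. eapply UL_sequence; eauto.
Qed.

Definition RepW c (T : situation -> R) := exists (Dm : situation -> bool -> R) (q : situation * bool -> nat -> R),
  rr c (encN encSitBit) (fun dn => q (fst dn) (snd dn)) /\
  (forall d, Un_cv (q d) (Dm (fst d) (snd d))) /\ generated_by Dm T.

Lemma RepW_fun c T1 T2 : RepW c T1 -> RepW c T2 -> T1 = T2.
Proof.
  intros (D1 & q1 & H1 & C1 & G1) (D2 & q2 & H2 & C2 & G2).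
  pose proof (rr_fun _ _ _ _ H1 H2) as E.
  assert (ED : forall s x, D1 s x = D2 s x).
  { intros s x. assert (q1 (s,x) = q2 (s,x)) as Eq
      by (apply functional_extensionality; intros n; apply (E ((s,x), n))).
    specialize (C1 (s,x)). rewrite Eq in C1. eapply UL_sequence; eauto. }
  apply functional_extensionality. intros s. induction s as [|s x IH] using rev_ind.
  - destruct G1 as [-> _], G2 as [-> _]. reflexivity.
  - rewrite (proj2 G1), (proj2 G2), IH, ED. reflexivity.
Qed.

Definition RepC c (T : situation -> R) := rr c encSit T.
Lemma RepC_fun c T1 T2 : RepC c T1 -> RepC c T2 -> T1 = T2.
Proof. intros H1 H2. apply functional_extensionality. apply (rr_fun _ _ _ _ H1 H2). Qed.

Lemma S_to_infty T tau w : growth_function tau ->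
  limsup_nonneg (fun n => T (prefix w n) - tau n) -> limsup_infty (fun n => T (prefix w n)).
Proof.
  intros (_ & _ & Hmono & Hunb) Hl B N. destruct (Hunb (B + 1)) as [n0 Hn0].
  destruct (Hl 1 (Nat.max N n0)) as [n [Hn Hgt]]. lra.
  exists n. split. lia. assert (tau n0 <= tau n) by (apply Hmono; lia). lra.
Qed.

Lemma existence Rn : exists phi, forecasting_system phi /\ precise phi /\ forall w, random Rn phi w.
Proof.
  destruct Rn.
  - exists (phiK (Tn RepML)). split; [apply phiK_fs|split; [apply phiK_precise|]].
    intros w [T [[_ (q & Hq & Hc)] [[_ Hs] Hu]]].
    destruct (rec_rat_rr _ _ Hq) as [c Hc'].
    apply (enum_kill RepML RepML_fun c T w); auto.
    exists q. split; auto. intros d; apply Hc.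
  - exists (phiK (Tn RepW)). split; [apply phiK_fs|split; [apply phiK_precise|]].
    intros w [T [[_ (Dm & _ & (q & Hq & Hc) & Hg)] [[_ Hs] Hu]]].
    destruct (rec_rat_rr _ _ Hq) as [c Hc'].
    apply (enum_kill RepW RepW_fun c T w); auto.
    exists Dm, q. split; auto. split; auto. intros d; apply Hc.
  - exists (phiK (Tn RepC)). split; [apply phiK_fs|split; [apply phiK_precise|]].
    intros w [T [[_ [_ Hq]] [[_ Hs] Hu]]].
    destruct (rec_rat_rr _ _ Hq) as [c Hc'].
    apply (enum_kill RepC RepC_fun c T w); auto.
  - exists (phiK (Tn RepC)). split; [apply phiK_fs|split; [apply phiK_precise|]].
    intros w [T [tau [[_ [_ Hq]] [[_ Hs] [Hg Hl]]]]].
    destruct (rec_rat_rr _ _ Hq) as [c Hc'].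
    apply (enum_kill RepC RepC_fun c T w); auto.
    eapply S_to_infty; eauto.
Qed.
Open Scope R_scope.

Definition GEQ := RComp SUB [cst 1; RComp SUB [P 1; P 0]].
Lemma ev_GEQ u v : reval GEQ [u; v] (1 - (v - u))%nat.
Proof. eapply ev_c2; [rv| eapply ev_c2; [rv|rv|apply ev_SUB] | apply ev_SUB]. Qed.

Lemma not_stationary Rn phi : precise phi -> (forall w, random Rn phi w) -> ~ stationary phi.
Proof.
  intros Hp Hall [I HI]. destruct (Rle_dec (1/2) (fst I)) as [h|h].
  - apply (not_all_random (cst 1) (fun _ => true)) with (phi := phi) (Rn := Rn); auto.
    + intros s. apply ev_cst.
    + intros s _. rewrite HI. lra.
    + intros s Hd; discriminate.
  - apply (not_all_random RZero (fun _ => false)) with (phi := phi) (Rn := Rn); auto.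
    + intros s. constructor.
    + intros s Hd; discriminate.
    + intros s _. rewrite HI. lra.
Qed.

Lemma not_computable Rn phi : precise phi -> (forall w, random Rn phi w) -> ~ computable_fs phi.
Proof.
  intros Hp Hall [[q [(c1 & c2 & c3 & Hc) Hq]] _].
  set (dir := fun s => if Rle_dec (1/2) (q s 4%nat) then true else false).
  set (A := RComp c1 [cst 4; P 0]). set (Bc := RComp c2 [cst 4; P 0]). set (K := RComp c3 [cst 4; P 0]).
  set (cd := RComp GEQ [RComp ADD [A; A]; RComp ADD [RComp ADD [Bc; Bc]; RComp ADD [K; cst 1]]]).
  assert (E16 : / 2 ^ 4 = 1/16) by (simpl; field).
  apply (not_all_random cd dir) with (phi := phi) (Rn := Rn); auto.
  - intros s. destruct (Hc (s, 4%nat)) as (a & b & k & H1 & H2 & H3 & H4).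
    simpl in H1, H2, H3, H4. unfold encN, encSit in H1, H2, H3; simpl in H1, H2, H3.
    assert (HA : reval A [encS s] a) by (eapply ev_c2; [rv|rv|exact H1]).
    assert (HB : reval Bc [encS s] b) by (eapply ev_c2; [rv|rv|exact H2]).
    assert (HK : reval K [encS s] k) by (eapply ev_c2; [rv|rv|exact H3]).
    eapply ev_c2; [eapply ev_c2; [exact HA|exact HA|apply ev_ADD] | | ].
    eapply ev_c2; [eapply ev_c2; [exact HB|exact HB|apply ev_ADD] | eapply ev_c2; [exact HK|rv|apply ev_ADD] | apply ev_ADD].
    eapply reval_conv; [apply ev_GEQ|].
    pose proof (pos_INR k).
    assert (Hkey : (INR a - INR b) / (INR k + 1) * (INR k + 1) = INR a - INR b) by (field; lra).
    unfold dir, bn. destruct (Rle_dec (1/2) (q s 4%nat)) as [h|h]; rewrite H4 in h.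
    + assert (INR (b + b + (k + 1)) <= INR (a + a)).
      { rewrite !plus_INR. simpl INR. apply Rmult_le_compat_r with (r := INR k + 1) in h; [|lra].
        rewrite Hkey in h. lra. }
      apply INR_le in H0. lia.
    + assert (INR (a + a) < INR (b + b + (k + 1))).
      { rewrite !plus_INR. simpl INR. apply Rnot_le_lt in h.
        apply Rmult_lt_compat_r with (r := INR k + 1) in h; [|lra].
        rewrite Hkey in h. lra. }
      apply INR_lt in H0. lia.
  - intros s Hd. unfold dir in Hd. destruct Rle_dec as [h|h]; [|discriminate].
    specialize (Hq s 4%nat). rewrite E16 in Hq. apply Rabs_def2 in Hq. lra.
  - intros s Hd. unfold dir in Hd. destruct Rle_dec as [h|h]; [discriminate|].
    specialize (Hq s 4%nat). rewrite E16 in Hq. apply Rabs_def2 in Hq. lra.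
Qed.

Theorem corollary15 (Rn : rnotion) :
  (exists phi, forecasting_system phi /\ precise phi /\
     forall w : path, random Rn phi w) /\
  (forall phi, forecasting_system phi -> precise phi ->
     (forall w : path, random Rn phi w) ->
     ~ stationary phi /\ ~ computable_fs phi).
Proof.
  split. apply existence.
  intros phi _ Hp Hall. split. eapply not_stationary; eauto. eapply not_computable; eauto.
Qed.
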